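(* Let $n\ge 2$, $\kappa\ge1$, and let $G\in\mathcal G_{[n;\kappa]}$ be a skew-symmetric game with payoff structure vectors $V_1^c,\dots,V_n^c\in\mathbb R^{\kappa^n}$. Then $$V_i^c=-V_1^c\ltimes W_{[\kappa^{i-2},\kappa]}\ltimes W_{[\kappa,\kappa^{i-1}]},\qquad i=2,\dots,n.$$
   Context: Semi-tensor product: for $A\in\mathbb R^{m\times n}$, $B\in\mathbb R^{p\times q}$ and $t=\mathrm{lcm}(n,p)$, $A\ltimes B=(A\otimes I_{t/n})(B\otimes I_{t/p})$; it is associative and coincides with the Kronecker product on column vectors. Swap matrix: $W_{[m,n]}\in\mathbb R^{mn\times mn}$ is the permutation matrix with $W_{[m,n]}(X\otimes Y)=Y\otimes X$ for all $X\in\mathbb R^m$, $Y\in\mathbb R^n$ (so $W_{[1,n]}=W_{[n,1]}=I_n$). A finite game $G\in\mathcal G_{[n;\kappa]}$ has players $\{1,\dots,n\}$, each with strategy set $\{1,\dots,\kappa\}$, strategy $j$ identified with $\delta_\kappa^j$ (the $j$-th column of $I_\kappa$), and payoffs $c_i$; $V_i^c\in\mathbb R^{\kappa^n}$ is the unique row vector with $c_i(x_1,\dots,x_n)=V_i^c\ltimes x_1\ltimes\cdots\ltimes x_n$ for all $x_j\in\{\delta_\kappa^1,\dots,\delta_\kappa^\kappa\}$. $G$ is skew-symmetric if for every permutation $\sigma\in\mathbf S_n$, every $i$ and every profile, $c_i(x_1,\dots,x_n)=\mathrm{sgn}(\sigma)\,c_{\sigma(i)}(x_{\sigma^{-1}(1)},\dots,x_{\sigma^{-1}(n)})$.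 *)

(* Defs.v *)
From mathcomp Require Import all_boot all_order all_algebra all_fingroup.
From mathcomp Require Import mxtens.
Set Implicit Arguments. Unset Strict Implicit. Unset Printing Implicit Defensive.
Import GRing.Theory Num.Theory.
Local Open Scope ring_scope.

(* Kronecker product: mxtens.tensmx (A *t B), with the standard row-major
   convention (A *t B)(i*p+k, j*q+l) = A i j * B k l. *)

Lemma stp_dim_proof (n p : nat) :
  (p * (lcmn n p %/ p) = n * (lcmn n p %/ n))%N.
Proof.
by rewrite mulnC divnK ?dvdn_lcmr // mulnC divnK ?dvdn_lcml.
Qed.

Definition stp {R : pzRingType} {m n p q : nat} (A : 'M[R]_(m, n))
  (B : 'M[R]_(p, q)) : 'M[R]_(m * (lcmn n p %/ n), q * (lcmn n p %/ p)) :=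
  (A *t (1%:M : 'M[R]_(lcmn n p %/ n)))
    *m castmx (stp_dim_proof n p, erefl)
         (B *t (1%:M : 'M[R]_(lcmn n p %/ p))).

Definition mx_heq {R : Type} {m n m' n' : nat}
  (A : 'M[R]_(m, n)) (B : 'M[R]_(m', n')) : Prop :=
  exists e : (m = m') * (n = n'), castmx e A = B.

(* W_[m,n] : the mn x mn permutation matrix with W (X ⊗ Y) = Y ⊗ X:
   the basis vector of index a*n+b (a<m, b<n) is sent to index b*m+a. *)
Definition swapmx {R : pzRingType} (m n : nat) : 'M[R]_(m * n) :=
  \matrix_(k, j) ((k : nat) == ((j %% n) * m + j %/ n)%N)%:R.

(* A game in G_[n;kappa]: players 'I_n (player j+1 of the paper is j),
   strategies 'I_kappa (strategy s+1 of the paper is s, identified with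
   delta_kappa^{s+1} = delta_mx s 0), payoffs c i x for a profile x. *)
Definition game (R : Type) (n kappa : nat) := 'I_n -> ('I_n -> 'I_kappa) -> R.

Definition sgn {R : pzRingType} {n : nat} (s : 'S_n) : R := (-1) ^+ odd_perm s.

Definition skew_symmetric {R : pzRingType} {n kappa : nat} (c : game R n kappa) :=
  forall (s : 'S_n) (i : 'I_n) (x : 'I_n -> 'I_kappa),
    c i x = sgn s * c (s i) (fun j => x ((s^-1)%g j)).

(* strategy vector delta_kappa^{x j + 1} for player j (0 for out-of-range j) *)
Definition strat_vec {R : pzRingType} {n kappa : nat} (x : 'I_n -> 'I_kappa)
  (j : nat) : 'cV[R]_kappa :=
  match insub j with Some j' => delta_mx (x j') 0 | None => 0 end.

(* x_1 ⋉ x_2 ⋉ ... ⋉ x_l  (on column vectors ⋉ is the Kronecker product) *)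
Fixpoint kron_prefix {R : pzRingType} {kappa : nat} (v : nat -> 'cV[R]_kappa)
  (l : nat) : 'cV[R]_(kappa ^ l) :=
  match l with
  | 0 => castmx (esym (expn0 kappa), erefl) (1%:M : 'M[R]_1)
  | l'.+1 => castmx (esym (expnSr kappa l'), muln1 1)
               (kron_prefix v l' *t v l')
  end.

Definition profile_vec {R : pzRingType} {n kappa : nat} (x : 'I_n -> 'I_kappa)
  : 'cV[R]_(kappa ^ n) := kron_prefix (strat_vec x) n.

(* V is the payoff structure vector of c_i:
   c_i(x_1,...,x_n) = V ⋉ x_1 ⋉ ... ⋉ x_n for all profiles
   (dimensions match, so this semi-tensor product is the ordinary product). *)
Definition is_structure_vector {R : pzRingType} {n kappa : nat}
  (c : game R n kappa) (i : 'I_n) (V : 'rV[R]_(kappa ^ n)) : Prop :=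
  forall x : 'I_n -> 'I_kappa, c i x = (V *m profile_vec x) 0 0.

(* Main.v *)
Require Import Defs.
From mathcomp Require Import all_boot all_order all_algebra all_fingroup.
From mathcomp Require Import mxtens.
From mathcomp Require Import zify ring.
Import GRing.Theory Num.Theory.
Set Implicit Arguments. Unset Strict Implicit. Unset Printing Implicit Defensive.

Fixpoint seg (K : nat) (f : nat -> nat) (s m : nat) : nat :=
  match m with 0 => 0%N | m'.+1 => (seg K f s m' * K + f (s + m'))%N end.

Lemma lt_comb (x y P Q : nat) : (x < P)%N -> (y < Q)%N -> (x * Q + y < P * Q)%N.
Proof. move=> hx hy; nia. Qed.



Lemma swap_bound m n b : (b < m * n)%N -> ((b %% n) * m + b %/ n < m * n)%N.
Proof.
move=> hb; have hn : (0 < n)%N by case: n hb => //; rewrite muln0.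
rewrite [(m * n)%N]mulnC; apply: lt_comb; first by rewrite ltn_mod.
by rewrite ltn_divLR.
Qed.

Lemma lcm_eq N p : (p %| N)%N -> lcmn N p = N.
Proof. by move=> h; apply/eqP; rewrite eqn_dvd dvdn_lcml andbT dvdn_lcm dvdnn h. Qed.

Lemma seg_cat K f s m1 m2 :
  seg K f s (m1 + m2) = (seg K f s m1 * K ^ m2 + seg K f (s + m1) m2)%N.
Proof.
elim: m2 => [|m2 IH]; first by rewrite addn0 expn0 muln1 addn0.
rewrite addnS /= IH expnSr addnA. ring.
Qed.

Lemma seg_lt K f s m : (forall j, f j < K)%N -> (seg K f s m < K ^ m)%N.
Proof. move=> hf; elim: m => [|m IH] /=; first by rewrite expn0.
by rewrite expnSr; apply: lt_comb. Qed.

Lemma seg_ext K f g s m : (forall j, s <= j < s + m -> f j = g j)%N ->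
  seg K f s m = seg K g s m.
Proof.
elim: m => [|m IH] h //=. rewrite IH ?h //; first lia.
move=> j hj; apply: h; lia.
Qed.

Lemma seg1 K f s : seg K f s 1 = f s.
Proof. by rewrite /= mul0n add0n addn0. Qed.

Lemma seg_split K f n j : (j.+2 <= n)%N ->
  seg K f 0 n = ((((f 0%N * K ^ j + seg K f 1 j) * K + f j.+1) * K ^ (n - j.+2))
     + seg K f j.+2 (n - j.+2))%N.
Proof.
move=> hn. have e : n = ((1 + j) + 1 + (n - j.+2))%N by lia.
rewrite {1}e !seg_cat !seg1 expn1 !add0n.
have -> : (1 + j + 1 = j.+2)%N by lia.
by have -> : (1 + j = j.+1)%N by lia.
Qed.

Lemma divmodE (x y d : nat) : (y < d)%N -> ((x * d + y) %/ d = x /\ (x * d + y) %% d = y)%N.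
Proof.
move=> hy; have hd : (0 < d)%N by lia.
by rewrite divnMDl // divn_small // addn0 modnMDl modn_small.
Qed.

Arguments divmodE x {y d}.

Lemma arith K n j a B b C : (0 < K)%N -> (j.+2 <= n)%N -> (a < K)%N -> (b < K)%N ->
  (B < K ^ j)%N -> (C < K ^ (n - j.+2))%N ->
  let k := (((a * K ^ j + B) * K + b) * K ^ (n - j.+2) + C)%N in
  let f2 t := ((t %% K ^ j.+1) * K + t %/ K ^ j.+1)%N in
  let k' := (f2 (k %/ K ^ (n - j.+2)) * K ^ (n - j.+2) + k %% K ^ (n - j.+2))%N in
  let f1 t := ((t %% K) * K ^ j + t %/ K)%N in
  (f1 (k' %/ K ^ (n - j.+1)) * K ^ (n - j.+1) + k' %% K ^ (n - j.+1))%N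
   = (((b * K ^ j + B) * K + a) * K ^ (n - j.+2) + C)%N.
Proof.
move=> hK hn ha hb hB hC k f2 k' f1.
set d2 := (K ^ (n - j.+2))%N.
have hd1 : K ^ (n - j.+1) = (K * d2)%N by rewrite /d2 -expnS; congr expn; lia.
have [e1 e2] := divmodE ((a * K ^ j + B) * K + b) hC.
rewrite /k' /k e1 e2 /f2.
have hbB : (B * K + b < K ^ j.+1)%N by rewrite expnSr; apply: lt_comb.
have -> : (((a * K ^ j + B) * K + b) = a * K ^ j.+1 + (B * K + b))%N by rewrite expnSr; ring.

have [e3 e4] := divmodE a hbB. rewrite e3 e4.
have hc : (a * d2 + C < K * d2)%N by apply: lt_comb.
have -> : (((B * K + b) * K + a) * d2 + C = (B * K + b) * (K * d2) + (a * d2 + C))%N by ring.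
rewrite hd1.
have [e5 e6] := divmodE (B * K + b) hc. rewrite e5 e6 /f1.
have [e7 e8] := divmodE B hb. rewrite e7 e8. ring.
Qed.
Local Open Scope ring_scope.

Section Ent.
Variable R : pzRingType.

Definition ent {m n} (A : 'M[R]_(m, n)) (i j : nat) : R :=
  if (insub i, insub j) is (Some i', Some j') then A i' j' else 0.

Lemma ent_ord m n (A : 'M[R]_(m, n)) i j (hi : (i < m)%N) (hj : (j < n)%N) :
  ent A i j = A (Ordinal hi) (Ordinal hj).
Proof. by rewrite /ent !insubT. Qed.

Lemma ordE m n (A : 'M[R]_(m, n)) (i : 'I_m) (j : 'I_n) : A i j = ent A i j.
Proof. by rewrite (ent_ord A (ltn_ord i) (ltn_ord j)); congr (A _ _); apply: val_inj. Qed.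

Lemma stp_permE m N p (A : 'M[R]_(m, N)) (B : 'M[R]_p) (f : nat -> nat) d r k :
  (0 < N)%N -> (p * d = N)%N -> (forall a b : 'I_p, B a b = ((a : nat) == f b)%:R) ->
  (forall b, b < p -> f b < p)%N -> (r < m)%N -> (k < N)%N ->
  ent (stp A B) r k = ent A r (f (k %/ d) * d + k %% d)%N.
Proof.
move=> hN hd hB hf hr hk.
have hdvd : (p %| N)%N by rewrite -hd dvdn_mulr.
have hL : lcmn N p = N.
  apply/eqP; rewrite eqn_dvd dvdn_lcml andbT dvdn_lcm dvdnn hdvd //.
rewrite /stp; move: (stp_dim_proof N p); move: (lcmn N p) hL => L hL; subst L.
have h1 : (N %/ N = 1)%N by rewrite divnn hN.
have hd' : (N %/ p = d)%N.
  have hp : (0 < p)%N by move: hN; rewrite -hd; case: p {A B hf hdvd hB hd} => //.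
  by rewrite -hd mulKn.
move: (N %/ N)%N h1 => u hu; subst u.
move: (N %/ p)%N hd' => u hu; subst u => e.
have hd0 : (0 < d)%N by move: hN; rewrite -hd; case: d {e hd} => //; rewrite muln0.
have hkd : (k %/ d < p)%N by rewrite ltn_divLR // hd.
have ht : (f (k %/ d) * d + k %% d < N)%N by rewrite -hd; apply: lt_comb; [exact: hf | rewrite ltn_mod].
have hr1 : (r < m * 1)%N by rewrite muln1.
have hk1 : (k < p * d)%N by rewrite hd.
rewrite (ent_ord _ hr1 hk1) (ent_ord _ hr ht) !mxE.
have ht1 : (f (k %/ d) * d + k %% d < N * 1)%N by rewrite muln1.
rewrite (bigD1 (Ordinal ht1)) //= big1 ?addr0.
  rewrite castmxE !mxE /= hB -!val_eqE /= !modn1 eqxx mulr1.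
  rewrite [X in _ * X](_ : _ = 1) ?mulr1; last first.
    rewrite divnMDl // (divn_small (ltn_pmod k hd0)) addn0 eqxx mul1r.
    by rewrite modnMDl modn_mod eqxx.
  by congr (A _ _); apply: val_inj => /=; rewrite divn1.
move=> j hj; rewrite castmxE !mxE /= hB -!val_eqE /= !modn1 eqxx mulr1.
case: eqP => [ej|]; last by rewrite mul0r mulr0.
case: eqP => [ej2|]; last by rewrite !mulr0.
exfalso; move/eqP: hj; apply; apply: val_inj => /=.
by rewrite (divn_eq j d) ej ej2.
Qed.

End Ent.

Section Prof.
Variable R : pzRingType.

Definition xn {n K} (x : 'I_n -> 'I_K) (j : nat) : nat :=
  match (insub j : option 'I_n) with Some j' => nat_of_ord (x j') | None => 0%N end.

Lemma xn_lt n K (x : 'I_n -> 'I_K) j : (0 < K)%N -> (xn x j < K)%N.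
Proof. by move=> hK; rewrite /xn; case: insub => // j'; exact: ltn_ord. Qed.

Lemma kron_seg n K (x : 'I_n -> 'I_K) l : (l <= n)%N ->
  forall (r : 'I_(K ^ l)) (c : 'I_1),
  @kron_prefix R K (strat_vec x) l r c = ((r : nat) == seg K (xn x) 0 l)%:R.
Proof.
elim: l => [|l IH] hl r c.
  rewrite /= castmxE !mxE -!val_eqE /=.
  by case: c => [[|]] //.
rewrite /= castmxE !mxE /= IH; last by apply: ltnW.
rewrite /strat_vec /xn insubT /= !mxE /= -!val_eqE /= modn1 eqxx andbT.
rewrite -natrM mulnb.
have hK : (0 < K)%N by have := ltn_ord (x (Sub l hl)); apply: leq_ltn_trans.
rewrite [in RHS](divn_eq r K) eq_addl_mul ?ltn_mod ?ltn_ord //.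
Qed.

Lemma pv_mul n K (V : 'rV[R]_(K ^ n)) (x : 'I_n -> 'I_K) : (0 < K)%N ->
  (V *m profile_vec x) 0 0 = ent V 0 (seg K (xn x) 0 n).
Proof.
move=> hK.
have hs : (seg K (xn x) 0 n < K ^ n)%N by apply: seg_lt => j; exact: xn_lt.
rewrite (ent_ord V (ltn0Sn 0) hs) !mxE (bigD1 (Ordinal hs)) //= big1 ?addr0.
  rewrite /profile_vec kron_seg // eqxx mulr1.
  by congr (V _ _); apply: val_inj.
move=> j hj; rewrite /profile_vec kron_seg //.
case: eqP => [e|]; last by rewrite mulr0.
by case/eqP: hj; apply: val_inj.
Qed.

End Prof.

Local Close Scope ring_scope.
Lemma exists_digits n K k : (0 < K)%N -> (k < K ^ n)%N ->
  exists x : 'I_n -> 'I_K, seg K (xn x) 0 n = k.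
Proof.
move=> hK hk.
have [f [hf hfk]] : exists f : nat -> nat, (forall j, f j < K)%N /\ seg K f 0 n = k.
  elim: n k hk => [|n IH] k hk.
    by exists (fun _ => 0%N); split => //; move: hk; rewrite expn0 ltnS leqn0 => /eqP.
  have hk' : (k %/ K < K ^ n)%N by rewrite ltn_divLR // -expnSr.
  have [f [hf hfk]] := IH _ hk'.
  exists (fun j => if j == n then k %% K else f j); split.
    by move=> j; case: eqP => _ //; rewrite ltn_mod.
  rewrite /= add0n eqxx (@seg_ext K _ f); last first.
    by move=> j hj; case: eqP => // e; move: hj; rewrite e ltnn andbF.
  by rewrite hfk -divn_eq.
exists (fun j => Ordinal (hf j)).
rewrite -hfk; apply: seg_ext => j hj.
rewrite /xn; case: insubP => [o _ ho|]; first by rewrite ho.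
by move: hj; rewrite add0n => /andP [_ ->].
Qed.

Lemma xn_at n K (x : 'I_n -> 'I_K) (o : 'I_n) : xn x o = x o.
Proof. rewrite /xn insubT ?ltn_ord // => h; congr (nat_of_ord (x _)); exact: val_inj. Qed.

Local Open Scope ring_scope.
Lemma oppE (T : pzRingType) m n (A : 'M[T]_(m,n)) i j : (- A) i j = - A i j.
Proof. by rewrite !mxE. Qed.

Definition nrows {T : Type} {m n} (A : 'M[T]_(m, n)) := m.
Definition ncols {T : Type} {m n} (A : 'M[T]_(m, n)) := n.

Theorem proposition3p8 (R : realFieldType) (n kappa : nat)
  (hn : (2 <= n)%N) (hk : (1 <= kappa)%N)
  (c : game R n kappa) (V : 'I_n -> 'rV[R]_(kappa ^ n))
  (hskew : skew_symmetric c)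
  (hV : forall i : 'I_n, is_structure_vector c i (V i))
  (i1 : 'I_n) (hi1 : (i1 : nat) = 0%N) :
  forall i : 'I_n, (0 < i)%N ->
    mx_heq (V i)
      (- stp (stp (V i1) (swapmx (kappa ^ i.-1) kappa))
             (swapmx kappa (kappa ^ i))).
Proof.
move=> i hi.
have hK : (0 < kappa)%N := hk.
have [j hij] : exists j, nat_of_ord i = j.+1 by exists i.-1; rewrite prednK.
have hjn : (j.+2 <= n)%N by rewrite -hij ltn_ord.
have ei : i.-1 = j by rewrite hij.
have hp1 : ((kappa ^ i.-1 * kappa) * kappa ^ (n - j.+1) = kappa ^ n)%N.
  by rewrite ei -expnSr -expnD; congr expn; lia.
have hp1pos : (0 < kappa ^ i.-1 * kappa)%N by rewrite muln_gt0 expn_gt0 hK.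
have hL1 : lcmn (kappa ^ n) (kappa ^ i.-1 * kappa) = (kappa ^ n)%N.
  by apply: lcm_eq; rewrite -hp1 dvdn_mulr.
have hc1 : ((kappa ^ i.-1 * kappa) * (lcmn (kappa ^ n) (kappa ^ i.-1 * kappa) %/ (kappa ^ i.-1 * kappa)) = kappa ^ n)%N.
  by rewrite hL1 mulnC divnK // -hp1 dvdn_mulr.
have hr1 : (1 * (lcmn (kappa ^ n) (kappa ^ i.-1 * kappa) %/ (kappa ^ n)) = 1)%N.
  by rewrite hL1 divnn expn_gt0 hK.
have hp2 : ((kappa * kappa ^ i) * kappa ^ (n - j.+2) = kappa ^ n)%N.
  by rewrite hij -expnS -expnD; congr expn; lia.
have hp2pos : (0 < kappa * kappa ^ i)%N by rewrite muln_gt0 expn_gt0 hK.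
have hL2 : lcmn ((kappa ^ i.-1 * kappa) * (lcmn (kappa ^ n) (kappa ^ i.-1 * kappa) %/ (kappa ^ i.-1 * kappa))) (kappa * kappa ^ i) = (kappa ^ n)%N.
  by rewrite hc1; apply: lcm_eq; rewrite -hp2 dvdn_mulr.
set M := - stp (stp (V i1) (swapmx (kappa ^ i.-1) kappa)) (swapmx kappa (kappa ^ i)).
have E : (1%N = nrows M) * (kappa ^ n = ncols M)%N.
  split; rewrite /nrows /ncols.
    by rewrite hL2 hc1 hr1 divnn expn_gt0 hK.
  by rewrite hL2 mulnC divnK // -hp2 dvdn_mulr.
exists E.
apply/matrixP => r k; rewrite castmxE.
have hkN : (k < kappa ^ n)%N := ltn_ord (cast_ord (esym E.2) k).
have hr0 : (r : nat) = 0%N.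
  by have := ltn_ord (cast_ord (esym E.1) r); rewrite ltnS leqn0 => /eqP.
rewrite /M oppE (ordE (V i)) (ordE (stp _ _)) /= hr0.
move: (nat_of_ord k) hkN => {}k hkN.
set S := stp (V i1) (swapmx (kappa ^ i.-1) kappa).
set f2 := fun b => ((b %% kappa ^ i) * kappa + b %/ kappa ^ i)%N.
set f1 := fun b => ((b %% kappa) * kappa ^ i.-1 + b %/ kappa)%N.
have hB2 : forall a b : 'I_(kappa * kappa ^ i)%N, @swapmx R kappa (kappa ^ i) a b = ((a : nat) == f2 b)%:R.
  by move=> a b; rewrite /swapmx mxE.
have hB1 : forall a b : 'I_(kappa ^ i.-1 * kappa)%N, @swapmx R (kappa ^ i.-1) kappa a b = ((a : nat) == f1 b)%:R.
  by move=> a b; rewrite /swapmx mxE.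
have hf2 : forall b, (b < kappa * kappa ^ i)%N -> (f2 b < kappa * kappa ^ i)%N.
  by move=> b hb; apply: swap_bound.
have hf1 : forall b, (b < kappa ^ i.-1 * kappa)%N -> (f1 b < kappa ^ i.-1 * kappa)%N.
  by move=> b hb; apply: swap_bound.
have hNpos : (0 < kappa ^ n)%N by rewrite expn_gt0 hK.
have hd2pos : (0 < kappa ^ (n - j.+2))%N by rewrite expn_gt0 hK.
have hp2' : ((kappa * kappa ^ i) * kappa ^ (n - j.+2) = ncols S)%N by rewrite /ncols hc1.
have hr0S : (0 < nrows S)%N by rewrite /nrows hr1.
have hkS : (k < ncols S)%N by apply: (leq_trans hkN); rewrite /ncols hc1.
have hSpos : (0 < ncols S)%N by rewrite /ncols hc1.
rewrite (stp_permE S hSpos hp2' hB2 hf2 hr0S hkS).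
set k' := (f2 _ * _ + _)%N.
have hk' : (k' < kappa ^ n)%N.
  rewrite /k' -hp2; apply: lt_comb; last by rewrite ltn_mod.
  by apply: hf2; rewrite ltn_divLR // hp2.
rewrite (stp_permE (V i1) hNpos hp1 hB1 hf1 (ltn0Sn 0) hk').
rewrite /k' /f1 /f2 /= ei hij.
have [x hx] := exists_digits hK hkN.
rewrite -hx -(pv_mul (V i) x hK) -hV (seg_split _ _ hjn).
have ha : (xn x 0 < kappa)%N by apply: xn_lt.
have hb : (xn x j.+1 < kappa)%N by apply: xn_lt.
have hB : (seg kappa (xn x) 1 j < kappa ^ j)%N by apply: seg_lt => m; apply: xn_lt.
have hC : (seg kappa (xn x) j.+2 (n - j.+2) < kappa ^ (n - j.+2))%N by apply: seg_lt => m; apply: xn_lt.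
have Ha := arith hK hjn ha hb hB hC; cbv zeta beta in Ha.
rewrite Ha.
set y := fun j0 => x (tperm i1 i j0).
have hne : i1 != i by rewrite -val_eqE /= hi1 hij.
have hoth : forall m, m != 0%N -> m != j.+1 -> xn y m = xn x m.
  move=> m hm0 hmj; rewrite /xn; case: insubP => [o _ ho|] //=.
  rewrite /y tpermD //.
    by apply/eqP => e; move: hm0; rewrite -ho -e /= hi1.
  by apply/eqP => e; move: hmj; rewrite -ho -e /= hij eqxx.
have y0 : xn y 0 = xn x j.+1 by rewrite -hi1 -hij !xn_at /y tpermL.
have yi : xn y j.+1 = xn x 0 by rewrite -hi1 -hij !xn_at /y tpermR.
have Hy : seg kappa (xn y) 0 n = (((xn x j.+1 * kappa ^ j + seg kappa (xn x) 1 j) * kappa + xn x 0) *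
     kappa ^ (n - j.+2) + seg kappa (xn x) j.+2 (n - j.+2))%N.
  rewrite (seg_split _ _ hjn) y0 yi.
  rewrite (@seg_ext _ (xn y) (xn x) 1 j); last first.
    by move=> m /andP [h1 h2]; apply: hoth; apply/eqP => e; move: h1 h2; rewrite e ?add1n ?ltnn.
  rewrite (@seg_ext _ (xn y) (xn x) j.+2); last first.
    by move=> m /andP [h1 h2]; apply: hoth; apply/eqP => e; move: h1 h2; rewrite e ?add1n ?ltnn.
  by [].
rewrite -Hy -(pv_mul (V i1) y hK) -hV.
rewrite (hskew (tperm i1 i) i x) tpermR tpermV /sgn odd_tperm hne expr1 mulN1r.
by [].
Qed.
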